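(* Let $A$ and $B$ be automata. (1) If $(f,n)$ is a normed forward simulation from $A$ to $B$, then $f$ is a branching forward simulation from $A$ to $B$. (2) If $f$ is a branching forward simulation from $A$ to $B$, define $n:\mathrm{steps}(A)\times\mathrm{states}(B)\to\mathbb{N}$ by $n(s\xrightarrow{a}t,u)=0$ if $u\notin f[s]$, and otherwise $n(s\xrightarrow{a}t,u)$ is the minimal length (number of steps) of an execution fragment of $B$ starting in $u$ that is $f$-related to the execution fragment $s\,a\,t$ of $A$. Then $(f,n)$ is a normed forward simulation from $A$ to $B$ (with $\mathbb{N}$ ordered by $<$).
   Context: An automaton $A$ consists of a set $\mathrm{states}(A)$ of states, a nonempty set $\mathrm{start}(A)\subseteq\mathrm{states}(A)$ of start states, a set $\mathrm{acts}(A)$ of actions containing a distinguished internal action $\tau$, and a set $\mathrm{steps}(A)\subseteq\mathrm{states}(A)\times\mathrm{acts}(A)\times\mathrm{states}(A)$ of steps; write $s\xrightarrow{a}_A t$ for $(s,a,t)\in\mathrm{steps}(A)$. An execution fragment of $A$ is a finite or infinite alternating sequence $s_0a_1s_1a_2s_2\cdots$ of states and actions, beginning with a state and, if finite, ending with a state, such that $s_{i-1}\xrightarrow{a_i}_A s_i$ for all $i>0$; its index set $\mathrm{Index}(\alpha)$ is the set of indices $i$ of its states $s_i$. An execution is an execution fragment whose first state is a start state. For a relation $R$ write $R[s]=\{u\mid (s,u)\in R\}$. Execution correspondence: Let $R\subseteq\mathrm{states}(A)\times\mathrm{states}(B)$ and let $\alpha=s_0a_1s_1\cdots$ and $\alpha'=u_0b_1u_1\cdots$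 be execution fragments of $A$ and $B$. An index relation over $R$ between $\alpha$ and $\alpha'$ is a relation $I\subseteq\mathrm{Index}(\alpha)\times\mathrm{Index}(\alpha')$ such that (1) $(i,j)\in I$ implies $(s_i,u_j)\in R$; (2) $(i,j)\in I$, $(i',j')\in I$ and $i<i'$ imply $j\le j'$; (3) every index of $\alpha$ is related by $I$ to some index of $\alpha'$ and every index of $\alpha'$ is related by $I$ to some index of $\alpha$; (4) if $(i,j),(i+1,j+1)\in I$ then $a_{i+1}=b_{j+1}$; if $(i,j),(i+1,j)\in I$ then $a_{i+1}=\tau$; if $(i,j),(i,j+1)\in I$ then $b_{j+1}=\tau$. The fragments $\alpha,\alpha'$ are $R$-related, written $(\alpha,\alpha')\in R$, if such an $I$ exists. A normed forward simulation from $A$ to $B$ is a pair $(f,n)$ where $f\subseteq\mathrm{states}(A)\times\mathrm{states}(B)$ and $n:\mathrm{steps}(A)\times\mathrm{states}(B)\to S$ for some set $S$ with a well-founded strict order $<$, such that: (1) if $s\in\mathrm{start}(A)$ then $f[s]\cap\mathrm{start}(B)\neq\emptyset$; (2) if $s\xrightarrow{a}_A t$ and $u\in f[s]$ then (a) $u\in f[t]$ and $a=\tau$, or (b) there is $v\in f[t]$ with $u\xrightarrow{a}_B v$, or (c) there is $v\in f[s]$ with $u\xrightarrow{\tau}_B v$ and $n(s\xrightarrow{a}t,v)<n(s\xrightarrow{a}t,u)$. A branching forward simulation from $A$ to $B$ is a relation $f\subseteq\mathrm{states}(A)\times\mathrm{states}(B)$ such that (1) if $s\in\mathrm{start}(A)$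 then $f[s]\cap\mathrm{start}(B)\neq\emptyset$; (2) if $s\xrightarrow{a}_A t$ and $u\in f[s]$ then $B$ has an execution fragment that starts in $u$ and is $f$-related to the execution fragment $s\,a\,t$ of $A$. *)

(* Defs.v *)
From Stdlib Require Import Arith Classical ClassicalEpsilon.

Set Implicit Arguments.

(* Automata over a common universe of actions [Act]; the internal action
   tau : Act is passed explicitly wherever needed. *)
Record automaton (Act : Type) := Automaton {
  state : Type;
  start : state -> Prop;
  step : state -> Act -> state -> Prop;
  start_nonempty : exists s, start s
}.

Arguments state {Act} a.
Arguments start {Act} a _.
Arguments step {Act} a _ _ _.

(* A (finite or infinite) alternating sequence s0 a1 s1 a2 s2 ...
   flen = Some n : finite with states s_0..s_n (n steps);
   flen = None   : infinite.
   fstate i = s_i, fact i = a_i (i >= 1); values outside the index set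
   are irrelevant junk. *)
Record frag (Act S : Type) := Frag {
  flen : option nat;
  fstate : nat -> S;
  fact : nat -> Act
}.

Arguments flen {Act S} _.
Arguments fstate {Act S} _ _.
Arguments fact {Act S} _ _.

Definition inIndex {Act S : Type} (al : frag Act S) (i : nat) : Prop :=
  match flen al with Some n => i <= n | None => True end.

Definition is_exec_frag {Act : Type} (A : automaton Act) (al : frag Act (state A)) : Prop :=
  forall i, inIndex al (S i) -> step A (fstate al i) (fact al (S i)) (fstate al (S i)).

Definition index_rel {Act SA SB : Type} (tau : Act) (R : SA -> SB -> Prop)
  (al : frag Act SA) (al' : frag Act SB) (I : nat -> nat -> Prop) : Prop :=
  (forall i j, I i j -> inIndex al i /\ inIndex al' j) /\
  (forall i j, I i j -> R (fstate al i) (fstate al' j)) /\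
  (forall i j i' j', I i j -> I i' j' -> i < i' -> j <= j') /\
  (forall i, inIndex al i -> exists j, I i j) /\
  (forall j, inIndex al' j -> exists i, I i j) /\
  (forall i j, I i j -> I (S i) (S j) -> fact al (S i) = fact al' (S j)) /\
  (forall i j, I i j -> I (S i) j -> fact al (S i) = tau) /\
  (forall i j, I i j -> I i (S j) -> fact al' (S j) = tau).

Definition R_related {Act SA SB : Type} (tau : Act) (R : SA -> SB -> Prop)
  (al : frag Act SA) (al' : frag Act SB) : Prop :=
  exists I, index_rel tau R al al' I.

Definition step_frag {Act S : Type} (s : S) (a : Act) (t : S) : frag Act S :=
  Frag (Some 1) (fun i => match i with 0 => s | _ => t end) (fun _ => a).

(* Normed forward simulation (f, n) with n valued in a set Sn carrying a
   well-founded strict order lt. n is defined on steps(A) x states(B). *)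
Definition normed_fwd_sim {Act : Type} (tau : Act) (A B : automaton Act)
  (f : state A -> state B -> Prop) (Sn : Type) (lt : Sn -> Sn -> Prop)
  (n : forall s a t, step A s a t -> state B -> Sn) : Prop :=
  (forall x, ~ lt x x) /\ (forall x y z, lt x y -> lt y z -> lt x z) /\
  well_founded lt /\
  (forall s, start A s -> exists u, f s u /\ start B u) /\
  (forall s a t (H : step A s a t) u, f s u ->
     (f t u /\ a = tau) \/
     (exists v, f t v /\ step B u a v) \/
     (exists v, f s v /\ step B u tau v /\ lt (n s a t H v) (n s a t H u))).

Definition branching_fwd_sim {Act : Type} (tau : Act) (A B : automaton Act)
  (f : state A -> state B -> Prop) : Prop :=
  (forall s, start A s -> exists u, f s u /\ start B u) /\
  (forall s a t u, step A s a t -> f s u ->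
     exists be : frag Act (state B),
       is_exec_frag B be /\ fstate be 0 = u /\
       R_related tau f (step_frag s a t) be).

Definition minlen_spec {Act : Type} (tau : Act) (A B : automaton Act)
  (f : state A -> state B -> Prop) (s : state A) (a : Act) (t : state A)
  (u : state B) (k : nat) : Prop :=
  (exists be : frag Act (state B), is_exec_frag B be /\ fstate be 0 = u /\
     flen be = Some k /\ R_related tau f (step_frag s a t) be) /\
  (forall (be : frag Act (state B)) m, is_exec_frag B be -> fstate be 0 = u ->
     flen be = Some m -> R_related tau f (step_frag s a t) be -> k <= m).

Definition n_branch {Act : Type} (tau : Act) (A B : automaton Act)
  (f : state A -> state B -> Prop) (s : state A) (a : Act) (t : state A)
  (u : state B) : nat :=
  if excluded_middle_informative (f s u)
  then epsilon (inhabits 0) (minlen_spec tau A B f s a t u)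
  else 0.

(* Main.v *)
From Pilot Require Import Defs.
From Stdlib Require Import Arith Lia Classical ClassicalEpsilon.
Import Pilot.Defs.

Definition cons_frag {Act St : Type} (tau : Act) (u : St) (be : frag Act St) : frag Act St :=
  Frag (match flen be with Some m => Some (S m) | None => None end)
       (fun i => match i with 0 => u | S i' => fstate be i' end)
       (fun j => match j with 0 => tau | 1 => tau | S j' => fact be j' end).

Section P1.
Variables (Act : Type) (tau : Act) (A B : automaton Act)
  (f : state A -> state B -> Prop) (s : state A) (a : Act) (t : state A).

Definition shape (be : frag Act (state B)) (k m : nat) : Prop :=
  flen be = Some m /\ (forall j, j <= k -> f s (fstate be j)) /\
  (forall j, 1 <= j <= k -> fact be j = tau) /\
  ((m = k /\ f t (fstate be k) /\ a = tau) \/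
   (m = S k /\ fact be m = a /\ f t (fstate be m))).

Lemma shape_related be k m : shape be k m -> R_related tau f (step_frag s a t) be.
Proof.
  intros (Hl & Hs & Ht & Hc).
  assert (Hkm : k <= m) by (destruct Hc as [(->&_)|(->&_)]; lia).
  exists (fun i j => (i = 0 /\ j <= k) \/ (i = 1 /\ j = m)).
  unfold index_rel, inIndex; rewrite Hl; simpl.
  split; [|split; [|split; [|split; [|split; [|split; [|split]]]]]].
  - intros i j [[-> ?]|[-> ->]]; lia.
  - intros i j [[-> ?]|[-> ->]]; simpl; [apply Hs; lia|].
    destruct Hc as [(->&?&_)|(->&_&?)]; auto.
  - intros i j i' j' [[-> ?]|[-> ->]] [[-> ?]|[-> ->]]; lia.
  - intros i Hi. destruct i as [|[|i]]; [exists 0; left; lia|exists m; right; lia|lia].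
  - intros j Hj. destruct (le_lt_dec j k); [exists 0; left; lia|].
    exists 1; right. destruct Hc as [(->&_)|(->&_)]; lia.
  - intros i j [[-> ?]|[-> ->]] [[? ?]|[? ?]]; try lia.
    destruct Hc as [(->&_&->)|(->&Hfa&_)].
    + symmetry; apply Ht; lia.
    + replace (S j) with (S k) by lia. symmetry; exact Hfa.
  - intros i j [[-> ?]|[-> ->]] [[? ?]|[? ?]]; try lia.
    destruct Hc as [(->&_&->)|(->&_)]; [reflexivity|lia].
  - intros i j [[-> ?]|[-> ->]] [[? ?]|[? ?]]; try lia.
    apply Ht; lia.
Qed.
End P1.

Lemma part1 (Act : Type) (tau : Act) (A B : automaton Act)
  (f : state A -> state B -> Prop) (Sn : Type) (lt : Sn -> Sn -> Prop)
  (n : forall s a t, step A s a t -> state B -> Sn) :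
  normed_fwd_sim tau A B f lt n -> branching_fwd_sim tau A B f.
Proof.
  intros (_ & _ & Hwf & Hst & Hstep). split; [exact Hst|].
  intros s a t u H Hfu.
  assert (Main : forall x u, n s a t H u = x -> f s u ->
     exists be k m, is_exec_frag B be /\ fstate be 0 = u /\ @shape _ tau A B f s a t be k m).
  { intro x. induction x as [x IH] using (well_founded_induction Hwf).
    intros u0 Hx Hf0.
    destruct (Hstep s a t H u0 Hf0) as [[Hft ->]|[[v [Hfv Hs]]|[v [Hfv [Hs Hlt]]]]].
    - exists (Frag (Some 0) (fun _ => u0) (fun _ => tau)), 0, 0.
      split; [|split; [reflexivity|]].
      + intros i Hi; unfold inIndex in Hi; simpl in Hi; lia.
      + unfold shape; simpl. split; [reflexivity|split; [intros; auto|split; [intros; lia|]]].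
        left; auto.
    - exists (step_frag u0 a v), 0, 1.
      split; [|split; [reflexivity|]].
      + intros i Hi; unfold inIndex in Hi; simpl in Hi. destruct i; [exact Hs|lia].
      + unfold shape; simpl. split; [reflexivity|split; [|split; [intros; lia|]]].
        * intros j Hj; destruct j; [exact Hf0|lia].
        * right; auto.
    - subst x. destruct (IH _ Hlt v eq_refl Hfv) as (be & k & m & Hex & H0 & Hsh).
      exists (cons_frag tau u0 be), (S k), (S m).
      destruct Hsh as (Hl & Hs' & Ht' & Hc).
      split; [|split; [reflexivity|]].
      + intros i Hi. unfold inIndex in Hi; simpl in Hi; rewrite Hl in Hi.
        destruct i as [|i]; simpl.
        * rewrite H0; exact Hs.
        * destruct i as [|i].
          -- apply (Hex 0). unfold inIndex; rewrite Hl; lia.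
          -- apply (Hex (S i)). unfold inIndex; rewrite Hl; lia.
      + unfold shape; simpl. rewrite Hl. split; [reflexivity|split; [|split]].
        * intros j Hj; destruct j; [exact Hf0|apply Hs'; lia].
        * intros j Hj; destruct j as [|[|j]]; [lia|reflexivity|apply Ht'; lia].
        * destruct Hc as [(->&?&?)|(->&?&?)]; [left; auto|right; auto]. }
  destruct (Main _ u eq_refl Hfu) as (be & k & m & Hex & H0 & Hsh).
  exists be; split; [exact Hex|split; [exact H0|]].
  eapply shape_related; exact Hsh.
Qed.

Lemma least_nat (P : nat -> Prop) n : P n -> exists k, P k /\ forall m, P m -> k <= m.
Proof.
  induction n as [n IH] using lt_wf_ind. intros Hn.
  destruct (classic (exists m, m < n /\ P m)) as [[m [Hm Pm]]|Hno].
  - exact (IH m Hm Pm).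
  - exists n; split; [exact Hn|]. intros m Pm.
    destruct (le_lt_dec n m); [lia|exfalso; apply Hno; eauto].
Qed.

Section P2.
Variables (Act : Type) (tau : Act) (A B : automaton Act)
  (f : state A -> state B -> Prop) (s : state A) (a : Act) (t : state A).

Lemma truncate be : is_exec_frag B be -> R_related tau f (step_frag s a t) be ->
  exists be' m, is_exec_frag B be' /\ fstate be' 0 = fstate be 0 /\ flen be' = Some m /\
    R_related tau f (step_frag s a t) be'.
Proof.
  intros Hex [I (H1 & H2 & H3 & H4 & H5 & H6 & H7 & H8)].
  destruct (H4 1) as [j1 Hj1]; [unfold inIndex; simpl; lia|].
  assert (Hin : forall j, j <= j1 -> inIndex be j).
  { destruct (H1 _ _ Hj1) as [_ Hi]. unfold inIndex in *.
    destruct (flen be); intros; [lia|trivial]. }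
  exists (Frag (Some j1) (fstate be) (fact be)), j1.
  split; [|split; [reflexivity|split; [reflexivity|]]].
  - intros i Hi. unfold inIndex in Hi; simpl in Hi. apply Hex, Hin; lia.
  - exists (fun i j => I i j /\ j <= j1). unfold index_rel, inIndex; simpl.
    split; [|split; [|split; [|split; [|split; [|split; [|split]]]]]].
    + intros i j [HI Hj]. destruct (H1 _ _ HI) as [Hi _]. unfold inIndex in Hi; simpl in Hi. auto.
    + intros i j [HI _]; apply H2; auto.
    + intros i j i' j' [? _] [? _]; eauto.
    + intros i Hi. destruct i as [|[|i]]; [|exists j1; auto|lia].
      destruct (H4 0) as [j0 Hj0]; [unfold inIndex; simpl; lia|].
      exists j0; split; [auto|]. apply (H3 0 j0 1 j1); auto.
    + intros j Hj. destruct (H5 j (Hin j Hj)) as [i Hi]. exists i; split; auto.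
    + intros i j [HA _] [HB0 _]; exact (H6 _ _ HA HB0).
    + intros i j [HA _] [HB0 _]; exact (H7 _ _ HA HB0).
    + intros i j [HA _] [HB0 _]; exact (H8 _ _ HA HB0).
Qed.

Lemma nb_spec u : f s u ->
  (exists be, is_exec_frag B be /\ fstate be 0 = u /\ R_related tau f (step_frag s a t) be) ->
  minlen_spec tau A B f s a t u (n_branch tau A B f s a t u).
Proof.
  intros Hf (be & Hex & H0 & HR).
  destruct (truncate be Hex HR) as (be' & m & Hex' & H0' & Hl & HR').
  destruct (least_nat (fun k => exists be, is_exec_frag B be /\ fstate be 0 = u /\
     flen be = Some k /\ R_related tau f (step_frag s a t) be) m) as [k [Pk Hk]].
  { exists be'; repeat split; auto. congruence. }
  unfold n_branch. destruct (excluded_middle_informative (f s u)) as [_|C]; [|contradiction].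
  apply epsilon_spec. exists k. split; [exact Pk|].
  intros b m' Hb Hb0 Hbl HbR. apply Hk. exists b; auto.
Qed.
End P2.

Lemma part2 (Act : Type) (tau : Act) (A B : automaton Act)
  (f : state A -> state B -> Prop) :
  branching_fwd_sim tau A B f ->
  normed_fwd_sim tau A B f Nat.lt
    (fun s a t (_ : step A s a t) u => n_branch tau A B f s a t u).
Proof.
  intros [Hst Hstep].
  split; [intros x; lia|split; [intros; lia|split; [exact lt_wf|split; [exact Hst|]]]].
  intros s a t H u Hfu. simpl.
  destruct (Hstep s a t u H Hfu) as (be0 & Hex0 & H00 & HR0).
  destruct (nb_spec _ tau A B f s a t u Hfu (ex_intro _ be0 (conj Hex0 (conj H00 HR0))))
    as [(be & Hex & H0 & Hl & [I (H1 & H2 & H3 & H4 & H5 & H6 & H7 & H8)]) _].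
  set (k := n_branch tau A B f s a t u) in *. clearbody k.
  destruct k as [|k].
  - destruct (H4 0) as [j0 Hj0]; [unfold inIndex; simpl; lia|].
    destruct (H4 1) as [j1 Hj1]; [unfold inIndex; simpl; lia|].
    destruct (H1 _ _ Hj0) as [_ Hi0]. destruct (H1 _ _ Hj1) as [_ Hi1].
    unfold inIndex in Hi0, Hi1; rewrite Hl in Hi0, Hi1.
    assert (j0 = 0) by lia. assert (j1 = 0) by lia. subst j0 j1.
    left. split.
    + specialize (H2 _ _ Hj1). simpl in H2. rewrite H0 in H2. exact H2.
    + exact (H7 0 0 Hj0 Hj1).
  - assert (Hin1 : inIndex be 1) by (unfold inIndex; rewrite Hl; lia).
    assert (Hin0 : inIndex be 0) by (unfold inIndex; rewrite Hl; lia).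
    assert (Hs1 := Hex 0 Hin1). rewrite H0 in Hs1.
    destruct (H4 0) as [j0 Hj0]; [unfold inIndex; simpl; lia|].
    destruct (classic (I 0 1)) as [HI01|HN].
    + assert (HI00 : I 0 0).
      { destruct (H5 0 Hin0) as [i0 Hi0]. destruct (H1 _ _ Hi0) as [Hi _].
        unfold inIndex in Hi; simpl in Hi. destruct i0 as [|[|i0]]; [exact Hi0| |lia].
        pose proof (H3 _ _ _ _ HI01 Hi0). lia. }
      pose proof (H8 0 0 HI00 HI01) as Htau.
      right; right. exists (fstate be 1). split; [exact (H2 _ _ HI01)|].
      split; [rewrite <- Htau; exact Hs1|].
      set (be2 := Frag (Some k) (fun j => fstate be (S j)) (fun j => fact be (S j))).
      assert (Hex2 : is_exec_frag B be2).
      { intros i Hi. unfold inIndex in Hi; simpl in Hi. simpl.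
        apply (Hex (S i)). unfold inIndex; rewrite Hl; lia. }
      assert (HR2 : R_related tau f (step_frag s a t) be2).
      { exists (fun i j => I i (S j)). unfold index_rel, inIndex; simpl.
        split; [|split; [|split; [|split; [|split; [|split; [|split]]]]]].
        - intros i j HI. destruct (H1 _ _ HI) as [Hi Hj].
          unfold inIndex in Hi, Hj; rewrite Hl in Hj; simpl in Hi; lia.
        - intros i j HI. exact (H2 _ _ HI).
        - intros i j i' j' HA HB' Hlt. pose proof (H3 _ _ _ _ HA HB' Hlt). lia.
        - intros i Hi. destruct i as [|[|i]]; [exists 0; exact HI01| |lia].
          destruct (H4 1) as [j Hj]; [unfold inIndex; simpl; lia|].
          destruct j as [|j]; [pose proof (H3 _ _ _ _ HI01 Hj); lia|].
          exists j; exact Hj.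
        - intros j Hj. destruct (H5 (S j)) as [i Hi]; [unfold inIndex; rewrite Hl; lia|].
          exists i; exact Hi.
        - intros i j HA HB'. exact (H6 _ _ HA HB').
        - intros i j HA HB'. exact (H7 _ _ HA HB').
        - intros i j HA HB'. exact (H8 _ _ HA HB'). }
      destruct (nb_spec _ tau A B f s a t (fstate be 1) (H2 _ _ HI01)
                 (ex_intro _ be2 (conj Hex2 (conj eq_refl HR2)))) as [_ Hmin].
      specialize (Hmin be2 k Hex2 eq_refl eq_refl HR2). lia.
    + destruct (H5 1 Hin1) as [i1 Hi1].
      destruct (H1 _ _ Hi1) as [Hi _]. unfold inIndex in Hi; simpl in Hi.
      destruct i1 as [|[|i1]]; [contradiction| |lia].
      assert (HI00 : I 0 0).
      { destruct j0 as [|[|j0]]; [exact Hj0|contradiction|].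
        pose proof (H3 _ _ _ _ Hj0 Hi1). lia. }
      pose proof (H6 0 0 HI00 Hi1) as Ha. simpl in Ha.
      right; left. exists (fstate be 1). split.
      * exact (H2 _ _ Hi1).
      * rewrite Ha; exact Hs1.
Qed.

Theorem mainTheorem8 (Act : Type) (tau : Act) (A B : automaton Act) :
  (forall (f : state A -> state B -> Prop) (Sn : Type) (lt : Sn -> Sn -> Prop)
          (n : forall s a t, step A s a t -> state B -> Sn),
      normed_fwd_sim tau A B f lt n -> branching_fwd_sim tau A B f) /\
  (forall f : state A -> state B -> Prop,
      branching_fwd_sim tau A B f ->
      normed_fwd_sim tau A B f Nat.lt
        (fun s a t (_ : step A s a t) u => n_branch tau A B f s a t u)).
Proof.
  split; [intros f Sn lt n; apply part1|intros f; apply part2].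
Qed.
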